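(* Let $\mathcal{M}$ be a finite $\mathcal{R}$-trivial monoid with unit $e$, $n=\#\mathcal{M}$, and $\mathcal{S}\subseteq\mathcal{M}$ a generating set. Let $\sigma_1,\dots,\sigma_p$ be representatives of the distinct sets $\mathcal{L}^{\mathcal{S}}_\sigma$ ($\sigma\in\mathcal{M}$), i.e. a complete system of representatives of loop-type classes, and let $d_i:=\#\{\sigma\in\mathcal{M}:\mathcal{L}^{\mathcal{S}}_\sigma=\mathcal{L}^{\mathcal{S}}_{\sigma_i}\}$. In $\mathbb{Z}\mathcal{M}$ define $$T_i:=\prod_{\tau\in\mathcal{L}^{\mathcal{S}}_{\sigma_i}}\tau\prod_{\kappa\in\mathcal{S}\setminus\mathcal{L}^{\mathcal{S}}_{\sigma_i}}(e-\kappa)\quad(i=1,\dots,p),$$ (factors in any order), $E_1:=\mathcal{P}_{a_1,b_1}(T_1)$, and recursively for $m=2,\dots,p$: $$Q_m:=T_m-\sum_{i=1}^{m-1}T_mE_i-\sum_{i=1}^{m-1}E_iT_m+\sum_{i,j=1}^{m-1}E_iT_mE_j,\qquad E_m:=\mathcal{P}_{a_m,b_m}(Q_m),$$ where for each $m$ the integers $a_m,b_m\ge0$ are arbitrary subject to $a_m\ge n-d_m$ and $b_m\ge d_m$. Then $E_1,\dots,E_p$ form a complete system of primitive orthogonal idempotents of $\mathbb{Z}\mathcal{M}$.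
   Context: $\mathcal{M}$ is $\mathcal{R}$-trivial: $\sigma\mathcal{M}=\tau\mathcal{M}$ implies $\sigma=\tau$, where $\sigma\mathcal{M}=\{\sigma\mu:\mu\in\mathcal{M}\}$. $\mathbb{Z}\mathcal{M}$ is the monoid ring of formal integer combinations of elements of $\mathcal{M}$, with unit $e$. $\mathcal{L}_\sigma:=\{\tau\in\mathcal{M}:\sigma\tau=\sigma\}$, $\mathcal{L}^{\mathcal{S}}_\sigma:=\mathcal{L}_\sigma\cap\mathcal{S}$; $\sigma\sim\sigma'$ (same loop-type) iff $\mathcal{L}_\sigma=\mathcal{L}_{\sigma'}$. For $X\in\mathbb{Z}\mathcal{M}$ and $a,b\in\mathbb{Z}_{\ge0}$, $\mathcal{P}_{a,b}(X):=e-(e-X^a)^b$. A complete system of primitive orthogonal idempotents of a ring $A$ is a finite set of nonzero $E_1,\dots,E_p\in A$ with $E_i^2=E_i$, $E_iE_j=0$ for $i\ne j$, each $E_i$ primitive (if $E_i=X+Y$ with $X^2=X$, $Y^2=Y$, $XY=YX=0$ then $X=0$ or $Y=0$), and $\sum_i E_i=1_A$. *)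

(* Defs.v *)
From HB Require Import structures.
From mathcomp Require Import all_boot all_order all_algebra.
Set Implicit Arguments. Unset Strict Implicit. Unset Printing Implicit Defensive.
Import Order.TTheory GRing.Theory Num.Theory.
Local Open Scope ring_scope.

Section MonoidRing.
(* A finite monoid is given by a finite carrier [M], a multiplication [mul]
   and a unit [e]; the monoid axioms are hypotheses of the main theorem. *)
Variables (M : finType) (mul : M -> M -> M) (e : M).

Definition R_trivial : Prop :=
  forall s t : M, [set mul s u | u : M] = [set mul t u | u : M] -> s = t.

Definition generates (S : {set M}) : Prop :=
  forall x : M, exists2 w : seq M, {subset w <= S} & x = foldr mul e w.

Definition LS (S : {set M}) (s : M) : {set M} := [set t in S | mul s t == s].

Definition ZM := {ffun M -> int}.

Definition zof (x : M) : ZM := [ffun s => ((s == x) : nat)%:Z].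
Definition zone : ZM := zof e.
Definition zmul (f g : ZM) : ZM :=
  [ffun s => \sum_(x : M) \sum_(y : M | mul x y == s) f x * g y].
Definition zexp (f : ZM) (n : nat) : ZM := iter n (zmul f) zone.
Definition zprod (s : seq ZM) : ZM := foldr zmul zone s.

Definition Pab (a b : nat) (X : ZM) : ZM := zone - zexp (zone - zexp X a) b.

Definition Qstep (T : ZM) (Es : seq ZM) : ZM :=
  T - \sum_(x <- Es) zmul T x - \sum_(x <- Es) zmul x T
    + \sum_(x <- Es) \sum_(y <- Es) zmul (zmul x T) y.

Fixpoint Eseq (T : nat -> ZM) (a b : nat -> nat) (m : nat) : seq ZM :=
  match m with
  | 0 => [::]
  | m'.+1 => let prev := Eseq T a b m' in
             rcons prev (Pab (a m') (b m') (Qstep (T m') prev))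
  end.

(* E_1 = P(T_1) (Qstep T [::] = T) and E_m = P(Q_m), indexed by 'I_p. *)
Definition Esys (p : nat) (T : 'I_p -> ZM) (a b : 'I_p -> nat) : 'I_p -> ZM :=
  let Tn m := if insub m is Some i then T i else 0 in
  let an m := if insub m is Some i then a i else 0%N in
  let bn m := if insub m is Some i then b i else 0%N in
  fun i => nth 0 (Eseq Tn an bn p) i.

Definition idempotent (X : ZM) : Prop := zmul X X = X.

Definition primitive (X : ZM) : Prop :=
  forall Y Z : ZM, X = Y + Z -> idempotent Y -> idempotent Z ->
    zmul Y Z = 0 -> zmul Z Y = 0 -> Y = 0 \/ Z = 0.

Definition complete_prim_orth_idem (p : nat) (E : 'I_p -> ZM) : Prop :=
  [/\ forall i, E i != 0,
      forall i, idempotent (E i),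
      forall i j, i != j -> zmul (E i) (E j) = 0,
      forall i, primitive (E i)
    & \sum_(i < p) E i = zone].

End MonoidRing.

(* Main.v *)
Require Import Defs.
From HB Require Import structures.
From mathcomp Require Import all_boot all_order all_algebra.
From mathcomp Require Import zify.
Set Implicit Arguments. Unset Strict Implicit. Unset Printing Implicit Defensive.
Import Order.TTheory GRing.Theory Num.Theory.
Local Open Scope ring_scope.

Lemma Pidem (R : pzRingType) (x : R) a b : x ^+ a * (1 - x) ^+ b = 0 ->
  (1 - (1 - x ^+ a) ^+ b) * (1 - (1 - x ^+ a) ^+ b) = 1 - (1 - x ^+ a) ^+ b.
Proof.
move=> h; set y := 1 - x ^+ a; set f := 1 - y ^+ b.
set G := \sum_(i < b) y ^+ i; set H := \sum_(i < a) x ^+ i.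
have h1 : 1 - y ^+ b = x ^+ a * G.
  by rewrite -opprB subrX1 -mulNr /y opprB opprB addrC subrK.
have cxx : GRing.comm (1 - x) x by apply: commr_sym; apply: commrB; [exact: commr1|exact: commr_refl].
have h2 : y = (1 - x) * H.
  by rewrite /y -opprB subrX1 -mulNr opprB.
have cH : GRing.comm (1 - x) H by apply: commr_sum => i _; apply: commrX.
have cy : GRing.comm y (1 - x) by rewrite h2; apply: commr_sym; apply: commrM => //; exact: commr_refl.
have cG : GRing.comm G ((1 - x) ^+ b).
  apply: commr_sym; apply: commr_sum => i _; apply: commr_sym; apply: commrX.
  by apply: commr_sym; apply: commrX.
have e0 : f * (1 - f) = 0.
  have -> : 1 - f = y ^+ b by rewrite /f; exact: subKr.
  rewrite /f h1 h2 exprMn_comm //.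
  by rewrite mulrA -(mulrA _ G) cG !mulrA h !mul0r.
have E : f * f = f - f * (1 - f) by rewrite mulrBr mulr1 subKr.
by rewrite E e0 subr0.
Qed.

Section Ring.
Variables (M : finType) (mul : M -> M -> M) (e : M).
Hypotheses (mulA : associative mul) (mul1m : left_id e mul) (mulm1 : right_id e mul).

Local Notation zmul := (zmul mul).
Local Notation zone := (zone e).

Lemma zmulE (f g : ZM M) s :
  zmul f g s = \sum_x \sum_y (if mul x y == s then f x * g y else 0).
Proof. by rewrite ffunE; apply: eq_bigr => x _; rewrite big_mkcond. Qed.

Lemma if_sum (I : finType) (c : bool) (F : I -> int) :
  (if c then \sum_i F i else 0) = \sum_i (if c then F i else 0).
Proof. by case: c => //; rewrite big1. Qed.

Lemma sum_if_eq (F : M -> int) w :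
  \sum_z (if w == z then F z else 0) = F w.
Proof. by rewrite -big_mkcond (big_pred1 w) // => z; rewrite /= eq_sym. Qed.

Lemma zmulA : associative zmul.
Proof.
move=> f g h; apply/ffunP => s; rewrite !zmulE.
transitivity (\sum_a \sum_b \sum_c (if mul a (mul b c) == s then f a * g b * h c else 0)).
  apply: eq_bigr => a _.
  under eq_bigr => z _ do rewrite zmulE big_distrr /= if_sum.
  rewrite exchange_big /=; apply: eq_bigr => b _.
  under eq_bigr => z _ do rewrite big_distrr /= if_sum.
  rewrite exchange_big /=; apply: eq_bigr => c _.
  rewrite -(sum_if_eq (fun z => if mul a z == s then f a * g b * h c else 0) (mul b c)).
  apply: eq_bigr => z _; do 2 case: ifP => _ //; by rewrite ?mulr0 ?mulrA.
transitivity (\sum_a \sum_b \sum_c (if mul (mul a b) c == s then f a * g b * h c else 0)).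
  by under eq_bigr do under eq_bigr do under eq_bigr do rewrite mulA.
symmetry.
under eq_bigr => x _ do under eq_bigr => y _ do rewrite zmulE big_distrl /= if_sum.
under eq_bigr => x _ do under eq_bigr => y _ do under eq_bigr => a _ do rewrite big_distrl /= if_sum.
under eq_bigr => x _ do rewrite exchange_big /=.
under eq_bigr => x _ do under eq_bigr => a _ do rewrite exchange_big /=.
rewrite exchange_big /=; apply: eq_bigr => a _.
rewrite exchange_big /=; apply: eq_bigr => b _.
rewrite exchange_big /=; apply: eq_bigr => c _.
rewrite -(sum_if_eq (fun z => if mul z c == s then f a * g b * h c else 0) (mul a b)).
by apply: eq_bigr => z _; do 2 case: ifP => _ //; rewrite mul0r.
Qed.

Lemma zof_val (x s : M) : zof x s = if s == x then 1 else 0.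
Proof. by rewrite ffunE; case: eqP. Qed.

Lemma zmul1 : left_id zone zmul.
Proof.
move=> f; apply/ffunP => s; rewrite zmulE (bigD1 e) //= [X in _ + X]big1 ?addr0.
  rewrite -[RHS](sum_if_eq f s); apply: eq_bigr => y _.
  by rewrite /Defs.zone zof_val eqxx mul1r mul1m eq_sym.
by move=> x /negPf nx; apply: big1 => y _; rewrite /Defs.zone zof_val nx mul0r; case: ifP.
Qed.

Lemma zmul1r : right_id zone zmul.
Proof.
move=> f; apply/ffunP => s; rewrite zmulE.
rewrite -[RHS](sum_if_eq f s); apply: eq_bigr => x _.
rewrite (bigD1 e) //= [X in _ + X]big1 ?addr0.
  by rewrite /Defs.zone zof_val eqxx mulr1 mulm1 eq_sym.
by move=> y /negPf ny; rewrite /Defs.zone zof_val ny mulr0; case: ifP.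
Qed.

Lemma zmulDl : left_distributive zmul +%R.
Proof.
move=> f g h; apply/ffunP => s; rewrite zmulE [in RHS]ffunE !zmulE -big_split /=.
apply: eq_bigr => x _; rewrite -big_split /=; apply: eq_bigr => y _.
by case: ifP; rewrite ?addr0 // ffunE mulrDl.
Qed.

Lemma zmulDr : right_distributive zmul +%R.
Proof.
move=> f g h; apply/ffunP => s; rewrite zmulE [in RHS]ffunE !zmulE -big_split /=.
apply: eq_bigr => x _; rewrite -big_split /=; apply: eq_bigr => y _.
by case: ifP; rewrite ?addr0 // ffunE mulrDr.
Qed.

HB.instance Definition _ := GRing.Zmodule.on (ZM M).
HB.instance Definition _ := GRing.Zmodule_isPzRing.Build (ZM M) zmulA zmul1 zmul1r zmulDl zmulDr.

Lemma zmulM (x y : ZM M) : zmul x y = x * y. Proof. by []. Qed.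
Lemma zoneE : zone = 1 :> ZM M. Proof. by []. Qed.
Lemma zexpE (x : ZM M) n : zexp mul e x n = x ^+ n.
Proof. by elim: n => // n IH; rewrite exprS -IH. Qed.


Hypothesis Rtriv : R_trivial mul.

Lemma loopM s x y : (mul s (mul x y) == s) = (mul s x == s) && (mul s y == s).
Proof.
apply/eqP/andP => [H|[/eqP H1 /eqP H2]]; last by rewrite mulA H1 H2.
have H1 : mul s x = s.
  apply: Rtriv; apply/setP => z; apply/imsetP/imsetP => [[u _ ->]|[u _ ->]].
    by exists (mul x u) => //; rewrite mulA.
  by exists (mul y u) => //; rewrite -{1}H !mulA.
by split; apply/eqP; [|rewrite -{2}H mulA H1].
Qed.

Definition chi s (x : ZM M) : int := \sum_t (if mul s t == s then x t else 0).

Lemma chiD s x y : chi s (x + y) = chi s x + chi s y.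
Proof. by rewrite /chi -big_split; apply: eq_bigr => t _; rewrite ffunE; case: ifP; rewrite ?addr0. Qed.
Lemma chiN s x : chi s (- x) = - chi s x.
Proof. by rewrite /chi -sumrN; apply: eq_bigr => t _; rewrite ffunE; case: ifP; rewrite ?oppr0. Qed.
Lemma chiB s x y : chi s (x - y) = chi s x - chi s y.
Proof. by rewrite chiD chiN. Qed.
Lemma chi0 s : chi s 0 = 0.
Proof. by apply: big1 => t _; rewrite ffunE; case: ifP. Qed.
Lemma chi_sum s (I : Type) (r : seq I) (F : I -> ZM M) :
  chi s (\sum_(i <- r) F i) = \sum_(i <- r) chi s (F i).
Proof. by elim: r => [|x r IH]; rewrite ?big_nil ?chi0 // !big_cons chiD IH. Qed.
Lemma chi_zof s t : chi s (zof t) = if mul s t == s then 1 else 0.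
Proof.
rewrite /chi (bigD1 t) //= big1 ?addr0; first by rewrite zof_val eqxx.
by move=> u /negPf nu; rewrite zof_val nu; case: ifP.
Qed.
Lemma chi1 s : chi s 1 = 1.
Proof. by rewrite -zoneE /Defs.zone chi_zof mulm1 eqxx. Qed.
Lemma chiM s x y : chi s (x * y) = chi s x * chi s y.
Proof.
rewrite /chi big_distrl /=.
under [RHS]eq_bigr => a _ do rewrite big_distrr /=.
rewrite -zmulM.
under eq_bigr => t _ do rewrite zmulE if_sum.
rewrite exchange_big /=; apply: eq_bigr => a _.
under eq_bigr => t _ do rewrite if_sum.
rewrite exchange_big /=; apply: eq_bigr => b _.
rewrite (bigD1 (mul a b)) //= big1 ?addr0.
  rewrite eqxx loopM.
  by case: (mul s a == s); case: (mul s b == s); rewrite ?mul0r ?mulr0.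
by move=> t /negPf nt; case: ifP => // _; rewrite eq_sym nt.
Qed.
Lemma chiX s x n : chi s (x ^+ n) = chi s x ^+ n.
Proof. by elim: n => [|n IH]; rewrite ?expr0 ?chi1 // !exprS chiM IH. Qed.


Definition supp (y : ZM M) (A : {set M}) := forall s, s \notin A -> y s = 0.
Definition downcl (A : {set M}) := forall s u, s \in A -> mul s u \in A.

Lemma supp_ideal A y x : downcl A -> supp y A -> supp (y * x) A.
Proof.
move=> dA sy s sA; rewrite -zmulM zmulE big1 // => a _; apply: big1 => b _.
case: ifP => // /eqP abs; case: (boolP (a \in A)) => aA.
  by move: (dA _ b aA); rewrite abs (negPf sA).
by rewrite sy ?mul0r.
Qed.

Lemma exists_max A : A != set0 ->
  exists2 s, s \in A & forall t u, t \in A -> mul t u = s -> t = s.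
Proof.
case/set0Pn => t0 t0A.
case: (@arg_maxnP _ t0 (mem A) (fun t => #|[set mul t u | u : M]|) t0A) => s sA smax.
exists s => // t u tA tu; apply: Rtriv; apply/eqP.
have sub : [set mul s v | v : M] \subset [set mul t v | v : M].
  apply/subsetP => z /imsetP [v _ ->]; apply/imsetP; exists (mul u v) => //.
  by rewrite -tu mulA.
rewrite eq_sym eqEcard sub /=; exact: smax.
Qed.

Definition cnt x (A : {set M}) := #|[set t in A | chi t x == 1]|.

Lemma NLgen x : (forall t, chi t x = 0 \/ chi t x = 1) ->
  forall k (A : {set M}) (y : ZM M), #|A| = k -> downcl A -> supp y A ->
  y * (x ^+ (#|A| - cnt x A) * (1 - x) ^+ cnt x A) = 0.
Proof.
move=> x01; elim=> [|k IH] A y cA dA sy.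
  have A0 : A = set0 by apply: cards0_eq.
  have -> : y = 0 by apply/ffunP => s; rewrite ffunE sy // A0 inE.
  by rewrite mul0r.
have : A != set0 by rewrite -card_gt0 cA.
case/exists_max => s sA smax.
set A' := A :\ s.
have dA' : downcl A'.
  move=> t u; rewrite !inE => /andP [ts tA]; rewrite dA // andbT.
  by apply/eqP => tus; move/eqP: ts; apply; apply: (smax t u).
have cA' : #|A'| = k by move: (cardsD1 s A); rewrite sA cA /= => [[]].
have key : forall z, chi s z = 0 -> supp (y * z) A'.
  move=> z hz r; rewrite !inE negb_and negbK => /orP [/eqP ->|rA]; last first.
    by apply: (supp_ideal _ dA sy).
  rewrite -zmulM zmulE (bigD1 s) //= [X in _ + X]big1 ?addr0.
    transitivity (y s * chi s z); last by rewrite hz mulr0.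
    rewrite /chi big_distrr /=.
    by apply: eq_bigr => b _; case: ifP; rewrite ?mulr0.
  move=> a nas; apply: big1 => b _; case: ifP => // /eqP abs.
  case: (boolP (a \in A)) => aA; last by rewrite sy ?mul0r.
  by move: nas; rewrite (smax a b aA abs) eqxx.
have cnt' : cnt x A = (((chi s x == 1) : nat) + cnt x A')%N.
  rewrite /cnt (cardsD1 s [set t in A | chi t x == 1]) !inE sA /=.
  congr (_ + _)%N; apply: eq_card => t; rewrite !inE; by case: (t == s).
have cle : (cnt x A' <= #|A'|)%N by apply: subset_leq_card; apply/subsetP => t; rewrite inE => /andP [].
have cA1 : #|A| = #|A'|.+1 by rewrite cA cA'.
have comm1 : forall n m, GRing.comm (x ^+ n) ((1 - x) ^+ m).
  by move=> n m; apply: commrX; apply: commr_sym; apply: commrX; apply: commr_sym; apply: commrB; [exact: commr1|exact: commr_refl].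
case: (x01 s) => hs.
  have := IH A' (y * x) cA' dA' (key _ hs).
  rewrite cnt' hs /= add0n cA1 subSn // exprS !mulrA => ->; done.
have hs' : chi s (1 - x) = 0 by rewrite chiB chi1 hs subrr.
have := IH A' (y * (1 - x)) cA' dA' (key _ hs').
rewrite cnt' hs eqxx /= cA1 subSS exprS.
have E : forall n c, x ^+ n * ((1 - x) * (1 - x) ^+ c) = (1 - x) * (x ^+ n * (1 - x) ^+ c).
  by move=> n c; rewrite mulrA -[1 - x]expr1 comm1 -mulrA.
by move=> H; rewrite E mulrA.
Qed.

Lemma NL x : (forall t, chi t x = 0 \/ chi t x = 1) ->
  x ^+ (#|M| - #|[set t | chi t x == 1]|) * (1 - x) ^+ #|[set t | chi t x == 1]| = 0.
Proof.
move=> x01.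
have := NLgen x01 (erefl #|[set: M]|) (y := 1) _ _.
have -> : cnt x [set: M] = #|[set t | chi t x == 1]|.
  by apply: eq_card => t; rewrite !inE.
rewrite cardsT mul1r; apply => //; first by move=> s; rewrite in_setT.
Qed.


Variable S : {set M}.
Hypothesis genS : generates mul e S.
Local Notation LS := (LS mul S).

Lemma loop_word s w : (mul s (foldr mul e w) == s) = all (fun k => mul s k == s) w.
Proof. by elim: w => [|k w IH] /=; rewrite ?mulm1 ?eqxx // loopM IH. Qed.

Lemma loop_LS s s' t : LS s = LS s' -> (mul s t == s) = (mul s' t == s').
Proof.
move=> E; case: (genS t) => w wS ->; rewrite !loop_word; apply: eq_in_all => k kw.
have kS := wS k kw.
have h : forall r, (mul r k == r) = (k \in LS r) by move=> r; rewrite inE kS.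
by rewrite !h E.
Qed.

Lemma chi_LS s s' x : LS s = LS s' -> chi s x = chi s' x.
Proof. by move=> E; apply: eq_bigr => t _; rewrite (loop_LS t E). Qed.

Lemma chi_zprod s (l : seq M) (f : M -> ZM M) :
  chi s (zprod mul e (map f l)) = \prod_(x <- l) chi s (f x).
Proof.
elim: l => [|x l IH] /=; first by rewrite big_nil zoneE chi1.
by rewrite big_cons zmulM chiM IH.
Qed.

Lemma prod_if (A : {set M}) (P : pred M) :
  \prod_(t in A) (if P t then 1 else 0 : int) = if [forall t in A, P t] then 1 else 0.
Proof.
case: forallP => H; first by apply: big1 => t tA; have := H t; rewrite tA /= => ->.
have [t] : exists t, ~~ ((t \in A) ==> P t).
  by apply/existsP; rewrite -negb_forall; apply/forallP.
rewrite negb_imply => /andP [tA /negPf Pt].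
by rewrite (bigD1 t) //= Pt mul0r.
Qed.

Lemma chiT s s0 (tau kap : seq M) :
  perm_eq tau (enum (LS s0)) -> perm_eq kap (enum (S :\: LS s0)) ->
  chi s (zmul (zprod mul e (map (zof (M:=M)) tau))
              (zprod mul e (map (fun k => zone - zof k) kap)))
  = if LS s == LS s0 then 1 else 0.
Proof.
move=> ht hk; rewrite zmulM chiM !chi_zprod (perm_big _ ht) (perm_big _ hk) !big_enum /=.
have h1 : \prod_(t in LS s0) chi s (zof t) = \prod_(t in LS s0) (if t \in LS s then 1 else 0 : int).
  apply: eq_bigr => t; rewrite inE => /andP [tS _]; by rewrite chi_zof inE tS.
have h2 : \prod_(t in S :\: LS s0) chi s (zone - zof t)
          = \prod_(t in S :\: LS s0) (if t \notin LS s then 1 else 0 : int).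
  apply: eq_bigr => t; rewrite !inE => /andP [_ tS].
  by rewrite chiB zoneE chi1 chi_zof tS /=; case: (mul s t == s); rewrite ?subrr ?subr0.
rewrite h1 h2 !prod_if.
have [E|NE] := eqVneq (LS s) (LS s0).
  rewrite E; have -> : [forall t in LS s0, t \in LS s0] by apply/forall_inP.
  suff -> : [forall t in S :\: LS s0, t \notin LS s0] by rewrite mul1r.
  by apply/forall_inP => t; rewrite inE => /andP [].
case: (boolP [forall t in LS s0, t \in LS s]) => H1; rewrite ?mul0r //.
case: (boolP [forall t in S :\: LS s0, t \notin LS s]) => H2; rewrite ?mulr0 //.
case/negP: NE; apply/eqP/setP => t.
move/forall_inP: H1 => H1; move/forall_inP: H2 => H2.
apply/idP/idP => tL; last exact: H1.
have tS : t \in S by move: tL; rewrite inE => /andP [].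
apply: contraT => nt; have := H2 t; rewrite in_setD nt tS => /(_ isT).
by rewrite tL.
Qed.


Lemma QstepE (T : ZM M) (Es : seq (ZM M)) :
  Qstep mul T Es = (1 - \sum_(x <- Es) x) * T * (1 - \sum_(x <- Es) x).
Proof.
set F := \sum_(x <- Es) x.
have e1 : \sum_(x <- Es) zmul T x = T * F by rewrite mulr_sumr.
have e2 : \sum_(x <- Es) zmul x T = F * T by rewrite mulr_suml.
have e3 : \sum_(x <- Es) \sum_(y <- Es) zmul (zmul x T) y = F * T * F.
  by rewrite mulr_suml mulr_suml; apply: eq_bigr => x _; rewrite mulr_sumr.
rewrite /Qstep e1 e2 e3 mulrBl mul1r mulrBr mulr1 mulrBl opprB addrA.
by rewrite (addrAC T) -[LHS]addrA [X in _ + X]addrC addrA.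
Qed.

Lemma sum_nth (Es : seq (ZM M)) : \sum_(x <- Es) x = \sum_(i < size Es) Es`_i.
Proof. by rewrite (big_nth 0) big_mkord. Qed.

Lemma int01 (c : int) : c * c = c -> c = 0 \/ c = 1.
Proof.
move=> h; have : c * (c - 1) = 0 by rewrite mulrBr mulr1 h subrr.
by move/eqP; rewrite mulf_eq0 subr_eq0 => /orP [/eqP|/eqP]; [left|right].
Qed.

Lemma idem_zero (u : ZM M) : u * u = u -> (forall s, chi s u = 0) -> u = 0.
Proof.
move=> uu u0.
have h : forall t, chi t u = 0 \/ chi t u = 1 by move=> t; left.
have := NL h.
have -> : #|[set t | chi t u == 1]| = 0%N.
  by apply: eq_card0 => t; rewrite inE u0.
rewrite subn0 expr0 mulr1.
have : (0 < #|M|)%N by apply/card_gt0P; exists e.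
case: #|M| => // n _.
suff -> : u ^+ n.+1 = u by [].
by elim: n => // n IH; rewrite exprS IH.
Qed.


Variables (p : nat) (sig : 'I_p -> M).
Hypothesis sig_distinct : forall i j : 'I_p, LS (sig i) = LS (sig j) -> i = j.
Hypothesis sig_complete : forall s : M, exists i : 'I_p, LS s = LS (sig i).
Variables (tau kap : 'I_p -> seq M).
Hypothesis tau_ord : forall i, perm_eq (tau i) (enum (LS (sig i))).
Hypothesis kap_ord : forall i, perm_eq (kap i) (enum (S :\: LS (sig i))).
Variables (a b : 'I_p -> nat).
Hypothesis ha : forall i, (#|M| - #|[set s : M | LS s == LS (sig i)]| <= a i)%N.
Hypothesis hb : forall i, (#|[set s : M | LS s == LS (sig i)]| <= b i)%N.

Let T := fun i : 'I_p =>
    zmul (zprod mul e (map (zof (M:=M)) (tau i)))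
         (zprod mul e (map (fun k => zone - zof k) (kap i))).
Let Tn m := if insub m is Some i then T i else 0.
Let an m := if insub m is Some i then a i else 0%N.
Let bn m := if insub m is Some i then b i else 0%N.
Let sn m := if insub m is Some i then sig i else e.

Lemma insub_ord m (mp : (m < p)%N) : insub m = Some (Ordinal mp).
Proof.
case: insubP => [u _ uE|]; last by rewrite mp.
by congr Some; apply: val_inj.
Qed.

Lemma snE (i : 'I_p) : sn i = sig i. Proof. by rewrite /sn valK. Qed.

Definition cls s m := LS s == LS (sn m).

Lemma cls_sig i j : (i < p)%N -> (j < p)%N -> cls (sn j) i = (j == i).
Proof.
move=> ip jp; rewrite /cls.
have /= -> := snE (Ordinal ip); have /= -> := snE (Ordinal jp).
apply/eqP/eqP => [/sig_distinct [] //|E].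
by have -> : Ordinal jp = Ordinal ip by apply: val_inj.
Qed.

Lemma cls_ex s : exists2 j, (j < p)%N & forall i, (i < p)%N -> cls s i = (j == i).
Proof.
case: (sig_complete s) => j E; exists (nat_of_ord j) => // i ip.
by rewrite /cls E -(snE j); exact: (cls_sig ip (ltn_ord j)).
Qed.

Lemma chiTn s m : (m < p)%N -> chi s (Tn m) = if cls s m then 1 else 0.
Proof.
move=> mp; rewrite /Tn /cls (insub_ord mp) /=; have /= -> := snE (Ordinal mp).
exact: chiT.
Qed.


Lemma PabE x (a' b' : nat) : Pab mul e a' b' x = 1 - (1 - x ^+ a') ^+ b'.
Proof. by rewrite /Pab !zexpE. Qed.

Lemma anE m (mp : (m < p)%N) : an m = a (Ordinal mp).
Proof. by rewrite /an insub_ord. Qed.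
Lemma bnE m (mp : (m < p)%N) : bn m = b (Ordinal mp).
Proof. by rewrite /bn insub_ord. Qed.

Lemma dE m (mp : (m < p)%N) :
  #|[set t | cls t m]| = #|[set s : M | LS s == LS (sig (Ordinal mp))]|.
Proof. by apply: eq_card => t; rewrite !inE /cls -(snE (Ordinal mp)). Qed.

Lemma d_pos m : (m < p)%N -> (0 < #|[set t | cls t m]|)%N.
Proof. by move=> mp; apply/card_gt0P; exists (sn m); rewrite inE /cls. Qed.

Lemma d_lt m t : ~~ cls t m -> (#|[set t | cls t m]| < #|M|)%N.
Proof.
move=> nt; have := cardsC [set t | cls t m].
have : (0 < #|~: [set t | cls t m]|)%N by apply/card_gt0P; exists t; rewrite !inE.
lia.
Qed.

Lemma left_pow (u y : ZM M) k : u * y = u -> u * y ^+ k = u.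
Proof. by move=> h; elim: k => [|k IH]; rewrite ?expr0 ?mulr1 // exprSr mulrA IH. Qed.
Lemma right_pow (u y : ZM M) k : y * u = u -> y ^+ k * u = u.
Proof. by move=> h; elim: k => [|k IH]; rewrite ?expr0 ?mul1r // exprS -mulrA IH. Qed.

Lemma Estep m : (m < p)%N -> forall Es : seq (ZM M),
  size Es = m ->
  (forall i s, (i < m)%N -> chi s Es`_i = if cls s i then 1 else 0) ->
  (forall i k, (i < m)%N -> (k < m)%N -> Es`_i * Es`_k = if i == k then Es`_i else 0) ->
  let E := Pab mul e (an m) (bn m) (Qstep mul (Tn m) Es) in
  [/\ E * E = E, (forall s, chi s E = if cls s m then 1 else 0),
      (forall i, (i < m)%N -> Es`_i * E = 0) & (forall i, (i < m)%N -> E * Es`_i = 0)].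
Proof.
move=> mp Es sz chiE orth E.
set F := \sum_(x <- Es) x.
set Q := Qstep mul (Tn m) Es.
have QE : Q = (1 - F) * Tn m * (1 - F) by rewrite /Q QstepE.
have chiQ : forall s, chi s Q = if cls s m then 1 else 0.
  move=> s; rewrite QE !chiM !chiB !chi1 chiTn //.
  case: ifP => csm; last by rewrite mulr0 mul0r.
  have -> : chi s F = 0.
    rewrite /F sum_nth chi_sum sz big1 // => i _.
    rewrite chiE //; case: (cls_ex s) => j jp hj.
    have jm : j = m by move: csm; rewrite hj // => /eqP.
    by rewrite hj ?(ltn_trans (ltn_ord i) mp) // jm eq_sym (ltn_eqF (ltn_ord i)).
  by rewrite subr0 !mulr1.
have EsF : forall i, (i < m)%N -> Es`_i * F = Es`_i.
  move=> i im; rewrite /F sum_nth sz mulr_sumr (bigD1 (Ordinal im)) //= orth // eqxx.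
  rewrite big1 ?addr0 // => k nk; rewrite orth //; case: eqP => // ik.
  by case/eqP: nk; apply: val_inj.
have FEs : forall i, (i < m)%N -> F * Es`_i = Es`_i.
  move=> i im; rewrite /F sum_nth sz mulr_suml (bigD1 (Ordinal im)) //= orth // eqxx.
  rewrite big1 ?addr0 // => k nk; rewrite orth //; case: eqP => // ik.
  by case/eqP: nk; apply: val_inj.
have uQ : forall i, (i < m)%N -> Es`_i * Q = 0.
  by move=> i im; rewrite QE !mulrA (mulrBr Es`_i) mulr1 EsF // subrr !mul0r.
have Qu : forall i, (i < m)%N -> Q * Es`_i = 0.
  by move=> i im; rewrite QE -[LHS]mulrA (mulrBl Es`_i) mul1r FEs // subrr mulr0.
have h01 : forall t, chi t Q = 0 \/ chi t Q = 1.
  by move=> t; rewrite chiQ; case: ifP; [right|left].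
have nil := NL h01.
have cardQ : #|[set t | chi t Q == 1]| = #|[set t | cls t m]|.
  by apply: eq_card => t; rewrite !inE chiQ; case: ifP.
rewrite cardQ in nil.
set d := #|[set t | cls t m]| in nil.
have hA : (#|M| - d <= an m)%N by rewrite anE /d dE.
have hB : (d <= bn m)%N by rewrite bnE /d dE.
have nil' : Q ^+ an m * (1 - Q) ^+ bn m = 0.
  rewrite -(subnK hA) -(subnKC hB) exprD exprD.
  by rewrite -mulrA [X in _ * X]mulrA nil mul0r mulr0.
have EE : E = 1 - (1 - Q ^+ an m) ^+ bn m by rewrite /E PabE.
have apos : (exists2 i, (i < m)%N & True) -> (0 < an m)%N.
  case=> i im _; apply: leq_trans hA; rewrite subn_gt0 /d.
  apply: (@d_lt _ (sn i)); rewrite cls_sig ?(ltn_trans im) //.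
  by rewrite (ltn_eqF im).
split.
- by rewrite EE; apply: Pidem.
- move=> s; rewrite EE chiB chi1 chiX chiB chi1 chiX chiQ.
  case: ifP => cs.
    rewrite expr1n subrr expr0n /=.
    by have := leq_trans (d_pos mp) hB; case: (bn m) => // n _; rewrite subr0.
  have : (0 < an m)%N by apply: leq_trans hA; rewrite subn_gt0 /d; apply: (@d_lt _ s); rewrite cs.
  by case: (an m) => // n _; rewrite expr0n /= subr0 expr1n subrr.
- move=> i im; have ap := apos (ex_intro2 _ _ i im I).
  have h1 : Es`_i * (1 - Q ^+ an m) = Es`_i.
    by rewrite mulrBr mulr1 -(prednK ap) exprS mulrA uQ // mul0r subr0.
  by rewrite EE mulrBr mulr1 left_pow // subrr.
- move=> i im; have ap := apos (ex_intro2 _ _ i im I).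
  have h1 : (1 - Q ^+ an m) * Es`_i = Es`_i.
    by rewrite mulrBl mul1r -(prednK ap) exprSr -mulrA Qu // mulr0 subr0.
  by rewrite EE mulrBl mul1r right_pow // subrr.
Qed.


Lemma Einv m : (m <= p)%N ->
  [/\ size (Eseq mul e Tn an bn m) = m,
      (forall i s, (i < m)%N -> chi s (Eseq mul e Tn an bn m)`_i = if cls s i then 1 else 0) &
      (forall i k, (i < m)%N -> (k < m)%N ->
         (Eseq mul e Tn an bn m)`_i * (Eseq mul e Tn an bn m)`_k
         = if i == k then (Eseq mul e Tn an bn m)`_i else 0)].
Proof.
elim: m => [|m IH] mp; first by split.
have mp' : (m < p)%N by [].
case: (IH (ltnW mp')) => sz chiE orth.
case: (Estep mp' sz chiE orth) => EE chiN lo ro.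
rewrite /=; set Es := Eseq mul e Tn an bn m; set E := Pab _ _ _ _ _ in EE chiN lo ro *.
have nthE : forall i, (i < m.+1)%N -> (rcons Es E)`_i = if (i < m)%N then Es`_i else E.
  move=> i im; rewrite nth_rcons sz; case: ltnP => // mi; have -> : i = m by lia.
  by rewrite eqxx.
split.
- by rewrite size_rcons sz.
- move=> i s im; rewrite nthE //; case: ltnP => [|mi]; first exact: chiE.
  by have -> : i = m by lia.
- move=> i k im km; rewrite !nthE //.
  case: (ltnP i m) => [ilt|mi]; case: (ltnP k m) => [klt|mk].
  + exact: orth.
  + have -> : k = m by lia.
    by rewrite lo // (ltn_eqF ilt).
  + have -> : i = m by lia.
    by rewrite ro // eq_sym (ltn_eqF klt).
  + have -> : i = m by lia.
    have -> : k = m by lia.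
    by rewrite eqxx.
Qed.


Lemma main_sec : complete_prim_orth_idem mul e (Esys mul e T a b).
Proof.
case: (Einv (leqnn p)) => sz chiE orth.
set Es := Eseq mul e Tn an bn p in sz chiE orth.
have EsysE : forall i : 'I_p, Esys mul e T a b i = Es`_i by [].
have chiEi : forall (i : 'I_p) s, chi s (Esys mul e T a b i) = if LS s == LS (sig i) then 1 else 0.
  by move=> i s; rewrite EsysE chiE // /cls snE.
split.
- move=> i; apply/eqP => E0; have := chiEi i (sig i); rewrite E0 chi0 eqxx.
  by move/eqP; rewrite eq_sym oner_eq0.
- by move=> i; rewrite /Defs.idempotent EsysE zmulM orth // eqxx.
- by move=> i j ij; rewrite !EsysE zmulM orth //; case: eqP => // /val_inj E; rewrite E eqxx in ij.
- move=> i Y Z EYZ YY ZZ YZ ZY.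
  rewrite /Defs.idempotent !zmulM in YY ZZ YZ ZY.
  have YE : Y * Esys mul e T a b i = Y by rewrite EYZ mulrDr YY YZ addr0.
  have ZE : Z * Esys mul e T a b i = Z by rewrite EYZ mulrDr ZZ ZY add0r.
  have other : forall (W : ZM M) s, W * Esys mul e T a b i = W -> LS s != LS (sig i) -> chi s W = 0.
    by move=> W s WE ns; rewrite -WE chiM chiEi (negPf ns) mulr0.
  have same : forall (W : ZM M) s, LS s == LS (sig i) -> chi s W = chi (sig i) W.
    by move=> W s /eqP; apply: chi_LS.
  have allz : forall W : ZM M, W * Esys mul e T a b i = W -> chi (sig i) W = 0 -> forall s, chi s W = 0.
    move=> W WE W0 s; case: (boolP (LS s == LS (sig i))) => h; first by rewrite same.
    exact: other.
  have hsum : chi (sig i) Y + chi (sig i) Z = 1.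
    by rewrite -chiD -EYZ chiEi eqxx.
  case: (@int01 (chi (sig i) Y)); first by rewrite -chiM YY.
    by move=> h; left; apply: idem_zero => //; apply: allz.
  move=> h; right; apply: idem_zero => //; apply: allz => //.
  by move: hsum; rewrite h; lia.
- set G := \sum_(i < p) Esys mul e T a b i.
  have GG : G * G = G.
    rewrite /G mulr_suml; apply: eq_bigr => i _; rewrite mulr_sumr (bigD1 i) //= !EsysE orth // eqxx.
    rewrite big1 ?addr0 // => k ik; rewrite EsysE orth //; case: eqP => // /val_inj ik'.
    by move: ik; rewrite ik' eqxx.
  have chiG : forall s, chi s G = 1.
    move=> s; rewrite /G chi_sum; case: (sig_complete s) => j hj.
    rewrite (bigD1 j) //= chiEi hj eqxx big1 ?addr0 // => k kj; rewrite chiEi hj.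
    by case: eqP => // /sig_distinct jk; move: kj; rewrite jk eqxx.
  have : 1 - G = 0.
    apply: idem_zero; first by rewrite mulrBr mulr1 mulrBl mul1r GG subrr subr0.
    by move=> s; rewrite chiB chi1 chiG subrr.
  by move/eqP; rewrite subr_eq0 => /eqP <-.
Qed.

End Ring.

Theorem mainTheorem9
  (M : finType) (mul : M -> M -> M) (e : M)
  (mulA : associative mul) (mul1m : left_id e mul) (mulm1 : right_id e mul)
  (Rtriv : R_trivial mul)
  (S : {set M}) (genS : generates mul e S)
  (p : nat) (sig : 'I_p -> M)
  (sig_distinct : forall i j : 'I_p, LS mul S (sig i) = LS mul S (sig j) -> i = j)
  (sig_complete : forall s : M, exists i : 'I_p, LS mul S s = LS mul S (sig i))
  (tau kap : 'I_p -> seq M)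
  (tau_ord : forall i, perm_eq (tau i) (enum (LS mul S (sig i))))
  (kap_ord : forall i, perm_eq (kap i) (enum (S :\: LS mul S (sig i))))
  (a b : 'I_p -> nat)
  (ha : forall i, (#|M| - #|[set s : M | LS mul S s == LS mul S (sig i)]| <= a i)%N)
  (hb : forall i, (#|[set s : M | LS mul S s == LS mul S (sig i)]| <= b i)%N) :
  let T := fun i : 'I_p =>
    zmul mul (zprod mul e (map (zof (M:=M)) (tau i)))
             (zprod mul e (map (fun k => zone e - zof k) (kap i))) in
  complete_prim_orth_idem mul e (Esys mul e T a b).
Proof.
move=> T; exact: (main_sec mulA mul1m mulm1 Rtriv genS sig_distinct sig_complete tau_ord kap_ord ha hb).
Qed.
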